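(* Let $(v_1,\dots,v_r)$ be a directed path in $H$ with $d(v_r)\ge1$. Let $Y=s(v_1)E_1\,s(v_2)E_2\cdots s(v_r)E_r$, where for $1\le i<r$, $E_i$ is the concatenation of all strings $e(v_i,w)$, $w$ ranging over the out-neighbors of $v_i$, listed in cyclic order and ending with $e(v_i,v_{i+1})$, and $E_r$ is the concatenation of all strings $e(v_r,w)$ listed in cyclic order starting from an arbitrary out-neighbor. Then the LZ77 parsing of $Y$ has exactly $3r+1+\sum_{i=1}^r d(v_i)$ phrases.
   Context: $H$ is a directed graph without loops in which no vertex has outdegree exactly 1; $d(v)$ denotes the outdegree of $v$. For each vertex $v$ introduce three symbols $v$, $v'$, $\$_v$; all these symbols are pairwise distinct (over all vertices). For a vertex $v$ with outdegree $d=d(v)\ge 1$, let $w_0,\dots,w_{d-1}$ be its out-neighbors in a fixed cyclic order (indices mod $d$); ''cyclic order'' refers to this order. Define $e(v,w_i)=(v'w_{i-1})^4v'w_i$ for $0\le i<d$ and $s(v)=v^4(v')^5\$_v$. LZ77 parsing of a string $z$: $z=z_1z_2\cdots z_t$ where, once $z_1,\dots,z_{i-1}$ are determined and the remaining suffix is nonempty, $z_i$ is the longest nonempty prefix $u$ of the remaining suffix such that $u^-$ ($u$ with its last symbol deleted) has an occurrence in $z$ starting at a position strictly smaller than the starting position of $u$ (the empty string always qualifies). The $z_i$ are the phrases. *)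

(* Defs.v *)
From HB Require Import structures.
From mathcomp Require Import all_boot.
Set Implicit Arguments. Unset Strict Implicit. Unset Printing Implicit Defensive.

(* The graph H is given by its out-neighbour lists: [nbrs v] lists the
   out-neighbours w_0, ..., w_{d-1} of v in the fixed cyclic order. *)

Section Defs.
Variable V : eqType.

Inductive sym := Base of V | Prime of V | Dollar of V.

Definition sym_enc (a : sym) : V + V + V :=
  match a with Base v => inl (inl v) | Prime v => inl (inr v) | Dollar v => inr v end.
Definition sym_dec (x : V + V + V) : sym :=
  match x with inl (inl v) => Base v | inl (inr v) => Prime v | inr v => Dollar v end.
Lemma sym_encK : cancel sym_enc sym_dec. Proof. by case. Qed.
HB.instance Definition _ := Equality.copy sym (can_type sym_encK).

Variable nbrs : V -> seq V.

Definition outdeg (v : V) : nat := size (nbrs v).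

Definition nbr (v : V) (i : nat) : V := nth v (nbrs v) (i %% outdeg v).

(* e(v, w_i) = (v' w_{i-1})^4 v' w_i *)
Definition e_str (v : V) (i : nat) : seq sym :=
  flatten (nseq 4 [:: Prime v; Base (nbr v (i + outdeg v).-1)])
  ++ [:: Prime v; Base (nbr v i)].

Definition s_str (v : V) : seq sym :=
  nseq 4 (Base v) ++ nseq 5 (Prime v) ++ [:: Dollar v].

Definition E_from (v : V) (j : nat) : seq sym :=
  flatten [seq e_str v (j + k) | k <- iota 0 (outdeg v)].

(* all e(v,w) in cyclic order, ending with e(v,w) where w = next *)
Definition E_ending (v next : V) : seq sym :=
  E_from v (index next (nbrs v)).+1.

Fixpoint Y_str (j0 : nat) (v : V) (rest : seq V) : seq sym :=
  match rest with
  | [::] => s_str v ++ E_from v j0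
  | w :: rest' => s_str v ++ E_ending v w ++ Y_str j0 w rest'
  end.
End Defs.

Section LZ.
Variable T : eqType.

Definition occurs_before (z u : seq T) (p : nat) : bool :=
  has (fun q => take (size u) (drop q z) == u) (iota 0 p).

(* length of the longest nonempty prefix u of drop p z such that u^- has an
   occurrence in z starting before p (1 always qualifies) *)
Definition phrase_len (z : seq T) (p : nat) : nat :=
  foldr maxn 1
    [seq L <- iota 1 (size z - p) | occurs_before z (take L.-1 (drop p z)) p].

Fixpoint lz77_from (fuel : nat) (z : seq T) (p : nat) : seq (seq T) :=
  match fuel with
  | 0 => [::]
  | f.+1 =>
      if p < size z then
        take (phrase_len z p) (drop p z) :: lz77_from f z (p + phrase_len z p)
      else [::]
  end.

(* the list of phrases of the LZ77 parsing of z (each phrase has length >= 1,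
   so size z steps suffice) *)
Definition lz77 (z : seq T) : seq (seq T) := lz77_from (size z) z 0.
End LZ.

(* Main.v *)
Require Import Defs.
From mathcomp Require Import all_boot zify.
Set Implicit Arguments. Unset Strict Implicit. Unset Printing Implicit Defensive.

Section LZfacts.
Variable T : eqType.
Implicit Types (z : seq T).

Lemma foldr_maxn_le (s : seq nat) L : 0 < L -> all (fun x => x <= L) s -> foldr maxn 1 s <= L.
Proof. move=> L0; elim: s => //= x s IH /andP[hx hs]; by rewrite geq_max hx IH. Qed.

Lemma foldr_maxn_ge (s : seq nat) x : x \in s -> x <= foldr maxn 1 s.
Proof.
elim: s => //= y s IH; rewrite in_cons => /orP[/eqP->|h]; first exact: leq_maxl.
by rewrite leq_max IH // orbT.
Qed.

Lemma foldr_maxn_ge1 (s : seq nat) : 1 <= foldr maxn 1 s.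
Proof. elim: s => //= y s IH; by rewrite leq_max IH orbT. Qed.

Lemma phrase_len_ge1 z p : 0 < phrase_len z p.
Proof. exact: foldr_maxn_ge1. Qed.

Lemma phrase_len_le z p : p < size z -> p + phrase_len z p <= size z.
Proof.
move=> hp; suff: phrase_len z p <= size z - p by lia.
apply: foldr_maxn_le; first by rewrite subn_gt0.
apply/allP => x; rewrite mem_filter mem_iota => /andP[_ /andP[_ ]]; lia.
Qed.

Lemma phrase_lenE z p L t k :
  0 < L -> p + L <= size z ->
  (L = 1 \/ exists2 q, q < p & take L.-1 (drop q z) = take L.-1 (drop p z)) ->
  0 < k -> t + k <= L ->
  (forall q, q < p + t -> take k (drop q z) != take k (drop (p + t) z)) ->
  phrase_len z p = L.
Proof.
move=> L0 hL hocc k0 htk hno.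
apply/eqP; rewrite eqn_leq; apply/andP; split.
- apply: foldr_maxn_le => //; apply/allP => x.
  rewrite mem_filter mem_iota => /andP[hx /andP[x1 x2]].
  rewrite leqNgt; apply/negP => Lx.
  case/hasP: hx => q; rewrite mem_iota => /andP[_ qp] /eqP heq.
  rewrite size_take size_drop in heq.
  have e1 : x.-1 < size z - p by lia.
  rewrite e1 in heq.
  apply/negP: (hno (q + t) ltac:(lia)); rewrite negbK; apply/eqP.
  have h2 := congr1 (fun s => drop t (take (t + k) s)) heq; simpl in h2.
  rewrite !take_takel in h2; try lia.
  rewrite (addnC t k) -!take_drop !drop_drop in h2.
  by rewrite addnC h2 addnC.
- case: hocc => [->|[q qp hq]]; first exact: foldr_maxn_ge1.
  apply: foldr_maxn_ge; rewrite mem_filter mem_iota; apply/andP; split; last lia.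
  apply/hasP; exists q; first by rewrite mem_iota; lia.
  rewrite size_take size_drop.
  have -> : L.-1 < size z - p by lia.
  by rewrite hq.
Qed.

Lemma lz_fuel z f g p : size z - p <= f -> size z - p <= g ->
  lz77_from f z p = lz77_from g z p.
Proof.
elim: f g p => [|f IH] [|g] p hf hg //=.
- by have -> : (p < size z) = false by lia.
- by have -> : (p < size z) = false by lia.
case: ifP => // hp; congr cons; apply: IH; have := phrase_len_ge1 z p; lia.
Qed.

Definition R z p := lz77_from (size z - p) z p.

Lemma R_step z p : p < size z -> size (R z p) = (size (R z (p + phrase_len z p))).+1.
Proof.
move=> hp; rewrite /R.
have -> : size z - p = (size z - p).-1.+1 by lia.
rewrite /= hp /=; congr S; congr size; apply: lz_fuel => //.
have := phrase_len_ge1 z p; lia.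
Qed.

Lemma R_end z p : size z <= p -> R z p = [::].
Proof. by move=> h; rewrite /R; have -> : size z - p = 0 by lia. Qed.

Lemma R_step' z p L : p < size z -> phrase_len z p = L -> size (R z p) = (size (R z (p + L))).+1.
Proof. by move=> h <-; apply: R_step. Qed.

Lemma loc_take (pre B post : seq T) i n : i + n <= size B ->
  take n (drop (size pre + i) (pre ++ B ++ post)) = take n (drop i B).
Proof.
move=> h; rewrite drop_cat; have -> : (size pre + i < size pre) = false by lia.
rewrite addKn drop_cat; case: ifP => hi.
  rewrite takel_cat // size_drop; lia.
have -> : n = 0 by lia. by rewrite !take0.
Qed.

Lemma nonocc_local (x0 : T) (pre B post : seq T) i n :
  i + n <= size B -> 0 < n -> nth x0 B i \notin pre ->
  (forall i', i' < i -> take n (drop i' B) != take n (drop i B)) ->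
  forall q, q < size pre + i ->
    take n (drop q (pre ++ B ++ post)) != take n (drop (size pre + i) (pre ++ B ++ post)).
Proof.
move=> hs hn hc hloc q hq; case: (ltnP q (size pre)) => hq'.
  apply/eqP => heq; have := congr1 (fun s => nth x0 s 0) heq.
  rewrite !nth_take // !nth_drop !addn0 nth_cat hq' nth_cat.
  have -> : (size pre + i < size pre) = false by lia.
  rewrite addKn nth_cat; have -> : i < size B by lia.
  move=> e; move: hc; by rewrite -e mem_nth.
have -> : q = size pre + (q - size pre) by lia.
rewrite !loc_take; try lia.
apply: hloc; lia.
Qed.
End LZfacts.
Section Block.
Variables (V : eqType) (nbrs : V -> seq V) (v : V).
Hypothesis hu : uniq (nbrs v).
Hypothesis hd : 1 < outdeg nbrs v.
Local Notation d := (outdeg nbrs v).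
Local Notation nb := (nbr nbrs v).

Lemma nbr_eq i i' : nb i = nb i' -> i %% d = i' %% d.
Proof.
rewrite /nbr => /eqP; rewrite nth_uniq //; first by move/eqP.
- rewrite ltn_pmod //; lia.
- rewrite ltn_pmod //; lia.
Qed.

Lemma A_neq_B i : nb (i + d).-1 != nb i.
Proof.
apply/eqP => /nbr_eq; have -> : (i + d).-1 = i + d.-1 by lia.
move/eqP; rewrite -{2}(addn0 i) eqn_modDl mod0n modn_small; lia.
Qed.

Lemma A_succ i : nb (i.+1 + d).-1 = nb i.
Proof. rewrite /nbr; have -> : (i.+1 + d).-1 = i + d by lia. by rewrite modnDr. Qed.

Lemma B_inj j k k' : k < d -> k' < d -> nb (j + k) = nb (j + k') -> k = k'.
Proof.
move=> hk hk' /nbr_eq /eqP; rewrite eqn_modDl !modn_small //; by move/eqP.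
Qed.

Lemma size_e i : size (e_str nbrs v i) = 10.
Proof. by []. Qed.

Lemma flatten_drop10 (ss : seq (seq (sym V))) k :
  all (fun x => size x == 10) ss -> drop (10 * k) (flatten ss) = flatten (drop k ss).
Proof.
elim: ss k => [|s ss IH] [|k] //=; first by rewrite drop0.
move=> /andP[/eqP hs hss]; rewrite drop_cat hs.
have -> : (10 * k.+1 < 10) = false by lia.
have -> : 10 * k.+1 - 10 = 10 * k by lia.
exact: IH.
Qed.

Variable j : nat.
Local Notation E := (E_from nbrs v j).
Local Notation ek k := (e_str nbrs v (j + k)).
Local Notation Bl := (s_str v ++ E_from nbrs v j).

Lemma all10 : all (fun x => size x == 10) [seq ek k | k <- iota 0 d].
Proof. by apply/allP => x /mapP[k _ ->]. Qed.

Lemma size_E : size E = 10 * d.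
Proof.
rewrite /E_from size_flatten /shape -map_comp.
rewrite (eq_map (g := fun=> 10)) //.
have h : forall s : seq nat, sumn [seq 10 | _ <- s] = 10 * size s.
  by elim => //= _ s ->; lia.
by rewrite h size_iota.
Qed.

Lemma E_drop k : k < d -> drop (10 * k) E = ek k ++ drop (10 * k.+1) E.
Proof.
move=> hk; rewrite /E_from !flatten_drop10 ?all10 //.
rewrite (drop_nth [::]) ?size_map ?size_iota //= (nth_map 0) ?size_iota // nth_iota //.
Qed.

Lemma E_split : E = ek 0 ++ drop 10 E.
Proof. have h0 : 0 < d by lia. have := E_drop h0; rewrite muln0 muln1 drop0 => h; exact: h. Qed.

Lemma Bl_drop k r : k < d -> drop (10 + 10 * k + r) Bl = drop r (ek k ++ drop (10 * k.+1) E).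
Proof.
move=> hk; rewrite drop_cat.
have -> : size (s_str v) = 10 by [].
have -> : (10 + 10 * k + r < 10) = false by lia.
have -> : 10 + 10 * k + r - 10 = r + 10 * k by lia.
by rewrite -drop_drop E_drop.
Qed.

Lemma size_Bl : size Bl = 10 + 10 * d.
Proof. by rewrite size_cat size_E. Qed.

Lemma nonocc_e k i : k < d -> i < 16 + 10 * k ->
  take 4 (drop i Bl) != [:: Prime v; Base (nb (j + k + d).-1); Prime v; Base (nb (j + k))].
Proof.
move=> hk hi.
case: (ltnP i 10) => h10.
  rewrite E_split.
  do 10 (case: i hi h10 => [|i] hi h10; [by apply/eqP; rewrite /s_str /e_str /= => H; congruence | ]).
  lia.
have hdiv := divn_eq (i - 10) 10.
set k' := (i - 10) %/ 10 in hdiv. set r := (i - 10) %% 10 in hdiv.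
have hr : r < 10 by rewrite /r ltn_mod.
clearbody k' r.
have hk' : k' <= k by lia.
have -> : i = 10 + 10 * k' + r by lia.
rewrite Bl_drop; last lia.
have hAB := A_neq_B (j + k).
case: r hr hdiv => [|[|[|[|[|[|[|[|[|[|r]]]]]]]]]] hr hdiv; apply/eqP; rewrite /e_str /=;
  try (move=> H; congruence).
- move=> H; injection H => h1 h2; move: hAB; by rewrite -h1 -h2 eqxx.
- move=> H; injection H => h1 h2; move: hAB; by rewrite -h1 -h2 eqxx.
- move=> H; injection H => h1 h2; move: hAB; by rewrite -h1 -h2 eqxx.
- move=> H; have h1 : nb (j + k') = nb (j + k) by injection H; intros; congruence.
  have := B_inj hk (leq_ltn_trans hk' hk) (esym h1); lia.
- have hk2 : k'.+1 < d by lia.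
  rewrite E_drop //= /e_str /=.
  move=> H.
  have h1 : nb (j + k') = nb (j + k + d).-1 by injection H; intros; congruence.
  have h2 : nb (j + k'.+1 + d).-1 = nb (j + k) by injection H; intros; congruence.
  rewrite addnS A_succ in h2; move: hAB; by rewrite -h1 -h2 eqxx.
- lia.
Qed.


Lemma Bl_drop' k : k < d -> drop (10 + 10 * k) Bl = ek k ++ drop (10 * k.+1) E.
Proof. by move=> hk; rewrite -(addn0 (10 + 10 * k)) Bl_drop. Qed.

Ltac enum_neq0 i h := first [ exfalso; lia | case: i h => [|i] h; [by apply/eqP; rewrite /s_str /e_str /= => H; congruence | enum_neq0 i h ] ].
Tactic Notation "enum_neq" ident(i) ident(h) constr(n) := enum_neq0 i h.

Variables (pre post : seq (sym V)).
Hypothesis hP : Prime v \notin pre.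
Hypothesis hD : Dollar v \notin pre.
Local Notation z := (pre ++ Bl ++ post).
Local Notation bs := (size pre).

Lemma size_z : size z = bs + (10 + 10 * d) + size post.
Proof. rewrite !size_cat size_E /=; lia. Qed.

Lemma pl5 : phrase_len z (bs + 5) = 5.
Proof.
apply: (@phrase_lenE _ _ _ _ 4 1) => //.
- rewrite size_z; lia.
- right; exists (bs + 4); first lia.
  rewrite !loc_take ?size_Bl; try lia.
  by rewrite E_split /s_str.
- rewrite -addnA; eapply (@nonocc_local _ (Dollar v)); rewrite ?size_Bl //; try lia.
  move=> i' hi'; rewrite E_split; enum_neq i' hi' 9.
Qed.

Lemma pl10 : phrase_len z (bs + 10) = 2.
Proof.
apply: (@phrase_lenE _ _ _ _ 0 2) => //.
- rewrite size_z; lia.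
- right; exists (bs + 4); first lia.
  rewrite !loc_take ?size_Bl; try lia.
  by rewrite E_split /s_str.
- rewrite addn0; eapply (@nonocc_local _ (Dollar v)); rewrite ?size_Bl //; try lia.
  + by rewrite E_split.
  + move=> i' hi'; rewrite E_split; enum_neq i' hi' 10.
Qed.

Lemma pl12 : phrase_len z (bs + 12) = 8.
Proof.
apply: (@phrase_lenE _ _ _ _ 4 4) => //.
- rewrite size_z; lia.
- right; exists (bs + 10); first lia.
  rewrite !loc_take ?size_Bl; try lia.
  by rewrite E_split /s_str.
- rewrite -addnA; eapply (@nonocc_local _ (Dollar v)); rewrite ?size_Bl //; try lia.
  + by rewrite E_split.
  + move=> i' hi'.
    have -> : take 4 (drop (12 + 4) Bl) =
      [:: Prime v; Base (nb (j + 0 + d).-1); Prime v; Base (nb (j + 0))] by rewrite E_split /= ?take0.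
    eapply nonocc_e; lia.
Qed.

Lemma plk k : 0 < k < d -> phrase_len z (bs + (10 + 10 * k)) = 10.
Proof.
case: k => [|k1] // /andP[_ hk].
apply: (@phrase_lenE _ _ _ _ 6 4) => //.
- rewrite size_z; lia.
- right; exists (bs + (10 + 10 * k1 + 8)); first lia.
  rewrite !loc_take ?size_Bl; try lia.
  rewrite Bl_drop; last lia.
  rewrite Bl_drop' // (E_drop (k := k1.+1)) //= /e_str /=.
  by rewrite addnS A_succ.
- rewrite -addnA; eapply (@nonocc_local _ (Dollar v)); rewrite ?size_Bl //; try lia.
  + by rewrite -nth_drop Bl_drop'.
  + move=> i' hi'.
    have -> : take 4 (drop (10 + 10 * k1.+1 + 6) Bl) =
      [:: Prime v; Base (nb (j + k1.+1 + d).-1); Prime v; Base (nb (j + k1.+1))].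
      by rewrite Bl_drop /= ?take0.
    eapply nonocc_e; lia.
Qed.

Lemma loop n k : 0 < k -> k + n = d ->
  size (R z (bs + (10 + 10 * k))) = n + size (R z (bs + (10 + 10 * d))).
Proof.
elim: n k => [|n IH] k hk hkn.
  by rewrite addn0 in hkn; rewrite hkn.
rewrite (R_step' (L := 10)); last (apply: plk; lia); last (rewrite size_z; lia).
have -> : bs + (10 + 10 * k) + 10 = bs + (10 + 10 * k.+1) by lia.
rewrite IH //; lia.
Qed.

Lemma tail_count : size (R z (bs + 5)) = d + 2 + size (R z (bs + (10 + 10 * d))).
Proof.
rewrite (R_step' _ pl5); last (rewrite size_z; lia).
have -> : bs + 5 + 5 = bs + 10 by lia.
rewrite (R_step' _ pl10); last (rewrite size_z; lia).
have -> : bs + 10 + 2 = bs + 12 by lia.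
rewrite (R_step' _ pl12); last (rewrite size_z; lia).
have -> : bs + 12 + 8 = bs + (10 + 10 * 1) by lia.
rewrite (@loop d.-1 1) //; lia.
Qed.

Lemma head_cons pre' : pre = rcons pre' (Base v) ->
  size (R z bs) = (size (R z (bs + 5))).+1.
Proof.
move=> hpre.
have hbs : 0 < bs by rewrite hpre size_rcons.
have hz1 : drop bs.-1 z = Base v :: Bl ++ post.
  by rewrite hpre size_rcons /= cat_rcons drop_size_cat.
have hz2 : drop bs z = Bl ++ post by rewrite drop_size_cat.
apply: R_step'; first (rewrite size_z; lia).
apply: (@phrase_lenE _ _ _ _ 4 1) => //.
- rewrite size_z; lia.
- right; exists bs.-1; first lia.
  by rewrite hz1 hz2 /s_str.
- eapply (@nonocc_local _ (Dollar v)); rewrite ?size_Bl //; try lia.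
  move=> i' hi'; enum_neq i' hi' 4.
Qed.

Lemma head_nil : pre = [::] -> size (R z bs) = (size (R z (bs + 5))).+2.
Proof.
move=> hpre; have hbs : bs = 0 by rewrite hpre.
rewrite hbs (R_step' (L := 1)); last first.
  apply: (@phrase_lenE _ _ _ _ 0 1) => //; try (rewrite size_z; lia); try (move=> q hq; lia).
  by left.
  rewrite size_z; lia.
rewrite (R_step' (L := 4)); last first.
  apply: (@phrase_lenE _ _ _ _ 3 1) => //.
  - rewrite size_z; lia.
  - right; exists 0 => //; by rewrite hpre /s_str.
  - rewrite (_ : 0 + 1 + 3 = bs + 4); last lia.
    eapply (@nonocc_local _ (Dollar v)); rewrite ?size_Bl //; try lia.
    move=> i' hi'; enum_neq i' hi' 4.
  rewrite size_z; lia.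
done.
Qed.

Lemma block_count : (pre = [::] \/ exists pre', pre = rcons pre' (Base v)) ->
  size (R z bs) = d + 3 + (pre == [::]) + size (R z (bs + size Bl)).
Proof.
rewrite size_Bl => -[hpre|[pre' hpre]].
  rewrite head_nil // tail_count hpre /=; lia.
rewrite (head_cons hpre) tail_count.
have -> : (pre == [::]) = false by rewrite hpre; clear hpre; case: pre'.
lia.
Qed.

End Block.

Section Global.
Variables (V : eqType) (nbrs : V -> seq V).
Hypothesis H_simple : forall v, uniq (nbrs v).
Hypothesis H_deg : forall v, outdeg nbrs v != 1.

Definition okv (v : V) (x : sym V) : bool :=
  match x with Base _ => true | Prime u => u == v | Dollar u => u == v end.

Lemma Bl_ok v j : all (okv v) (s_str v ++ E_from nbrs v j).
Proof.
rewrite all_cat /= eqxx /=; rewrite /E_from.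
elim: (iota 0 _) => [//|k s IH].
rewrite (_ : flatten _ = e_str nbrs v (j + k) ++ flatten [seq e_str nbrs v (j + k0) | k0 <- s]) //.
rewrite all_cat IH andbT.
by rewrite /e_str /= eqxx.
Qed.

Lemma Bl_prime v j u : Prime u \in s_str v ++ E_from nbrs v j -> u = v.
Proof. by move=> h; have := allP (Bl_ok v j) _ h => /= /eqP. Qed.

Lemma Bl_dollar v j u : Dollar u \in s_str v ++ E_from nbrs v j -> u = v.
Proof. by move=> h; have := allP (Bl_ok v j) _ h => /= /eqP. Qed.

Lemma last_Bl v j x0 : 0 < outdeg nbrs v ->
  last x0 (s_str v ++ E_from nbrs v j) = Base (nbr nbrs v (j + (outdeg nbrs v).-1)).
Proof.
move=> hd; rewrite last_cat /E_from.
have -> : iota 0 (outdeg nbrs v) = iota 0 (outdeg nbrs v).-1 ++ [:: (outdeg nbrs v).-1].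
  by rewrite -{1}(prednK hd) -addn1 iotaD add0n.
by rewrite map_cat flatten_cat last_cat /= /e_str /=.
Qed.

Lemma global j0 rest v pre :
  path (fun x y => y \in nbrs x) v rest -> uniq (v :: rest) ->
  0 < outdeg nbrs (last v rest) ->
  (forall u, u \in v :: rest -> Prime u \notin pre /\ Dollar u \notin pre) ->
  (pre = [::] \/ exists pre', pre = rcons pre' (Base v)) ->
  size (R (pre ++ Y_str nbrs j0 v rest) (size pre)) =
    3 * size (v :: rest) + (pre == [::]) + sumn [seq outdeg nbrs u | u <- v :: rest].
Proof.
elim: rest v pre => [|w rest IH] v pre hpath hun hlast hpre hhead.
- have hd : 1 < outdeg nbrs v by have := H_deg v; move: hlast => /=; lia.
  have [hP hD] := hpre v (mem_head _ _).
  change (Y_str nbrs j0 v [::]) with (s_str v ++ E_from nbrs v j0).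
  rewrite -(cats0 (s_str v ++ E_from nbrs v j0)).
  rewrite (block_count (H_simple v) hd j0 [::] hP hD hhead).
  rewrite R_end; last by rewrite !size_cat /=; lia.
  rewrite /=; lia.
- have /andP[hw {}hpath] := hpath.
  have hd0 : 0 < outdeg nbrs v by rewrite /outdeg; case: (nbrs v) hw.
  have hd : 1 < outdeg nbrs v by have := H_deg v; lia.
  have [hP hD] := hpre v (mem_head _ _).
  set j := (index w (nbrs v)).+1.
  change (Y_str nbrs j0 v (w :: rest)) with (s_str v ++ E_ending nbrs v w ++ Y_str nbrs j0 w rest).
  rewrite /E_ending -/j (catA (s_str v)).
  rewrite (block_count (H_simple v) hd j _ hP hD hhead).
  rewrite (catA pre) -size_cat.
  move: hun; rewrite cons_uniq => /andP[hvn hun].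
  have hne : pre ++ (s_str v ++ E_from nbrs v j) != [::] by case: (pre).
  rewrite IH //.
  + rewrite (negbTE hne) /=; lia.
  + move=> u hu; have [hPu hDu] : Prime u \notin pre /\ Dollar u \notin pre by apply: hpre; rewrite in_cons hu orbT.
    have huv : u != v by apply/eqP => e; move: hvn; rewrite -e hu.
    rewrite !(mem_cat _ pre) (negbTE hPu) (negbTE hDu) !orFb; split.
      by apply/negP => h; have e := Bl_prime h; move: huv; rewrite e eqxx.
    by apply/negP => h; have e := Bl_dollar h; move: huv; rewrite e eqxx.
  + right.
    have hl : last (Base w) (pre ++ (s_str v ++ E_from nbrs v j)) = Base w.
      rewrite last_cat last_Bl // /nbr.
      have -> : (j + (outdeg nbrs v).-1) = index w (nbrs v) + outdeg nbrs v by rewrite /j; lia.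
      by rewrite modnDr modn_small ?index_mem // nth_index.
    move: hl hne; case: (pre ++ _) / lastP => // s x; rewrite last_rcons => -> _.
    by exists s.
Qed.
End Global.

Theorem lemma9 (V : eqType) (nbrs : V -> seq V)
  (H_noloop : forall v, v \notin nbrs v)
  (H_simple : forall v, uniq (nbrs v))
  (H_deg : forall v, outdeg nbrs v != 1)
  (v1 : V) (vs : seq V)
  (H_path : path (fun x y => y \in nbrs x) v1 vs)
  (H_uniq : uniq (v1 :: vs))
  (H_last : 0 < outdeg nbrs (last v1 vs))
  (j0 : nat) (H_j0 : j0 < outdeg nbrs (last v1 vs)) :
  size (lz77 (Y_str nbrs j0 v1 vs)) =
    3 * size (v1 :: vs) + 1 + sumn [seq outdeg nbrs v | v <- v1 :: vs].
Proof.
have := @global V nbrs H_simple H_deg j0 vs v1 [::] H_path H_uniq H_last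
  (fun u _ => conj isT isT) (or_introl erefl).
rewrite cat0s /= => <-.
by rewrite /lz77 /R subn0.
Qed.
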